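(* There is a constant $C_n>0$ depending only on $n$ such that: if $Z:\mathbb{T}^d\to Gl(n,\mathbb{C})$ (continuous) satisfies $\left|\int_{\mathbb{T}^d}\det Z(\theta)\,d\theta\right|=1$, then there exists $\lambda\in[-1,1]$ such that $$\left|\int_{\mathbb{T}^d}\det\big(\Re Z(\theta)+\lambda\Im Z(\theta)\big)\,d\theta\right|\ge C_n.$$
   Context: $\mathbb{T}^d=\mathbb{R}^d/\mathbb{Z}^d$ with Haar (Lebesgue) measure; $\Re Z$ and $\Im Z$ are the entrywise real and imaginary parts of $Z$. *)

(* Defs.v *)
From mathcomp Require Import all_boot all_algebra.
From mathcomp Require Import all_classical all_reals all_analysis.
From mathcomp Require Import complex.
Import GRing.Theory Num.Theory numFieldTopology.Exports numFieldNormedType.Exports.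
Local Open Scope ring_scope.
Local Open Scope classical_set_scope.

(* A function on the torus T^d = R^d / Z^d is represented by its lift to R^d
   ('rV[R]_d), i.e. a function that is 1-periodic in every coordinate. *)
Definition torus_periodic {R : realType} {d : nat} {T : Type}
    (f : 'rV[R]_d -> T) : Prop :=
  forall (x : 'rV[R]_d) (i : 'I_d), f (x + delta_mx 0 i) = f x.

(* Integral against the Haar (Lebesgue) measure of T^d, computed as the
   iterated Lebesgue integral over the fundamental domain [0,1]^d
   (for continuous functions this coincides with the product-measure
   integral, by Fubini). *)
Fixpoint torus_int {R : realType} (d : nat) : ('rV[R]_d -> R) -> R :=
  match d return ('rV[R]_d -> R) -> R with
  | 0 => fun f => f 0
  | d'.+1 => fun f =>
      Rintegral (@lebesgue_measure R) `[0%R, 1%R]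
        (fun t : R => torus_int d' (fun x : 'rV[R]_d' =>
                         f (row_mx (const_mx t : 'rV[R]_1) x)))
  end.

Definition torus_cint {R : realType} (d : nat) (f : 'rV[R]_d -> R[i]) : R[i] :=
  (torus_int d (fun x => complex.Re (f x)) +i* torus_int d (fun x => complex.Im (f x)))%C.

Definition mxRe {R : realType} {n : nat} (Z : 'M[R[i]]_n) : 'M[R]_n :=
  map_mx (@complex.Re R) Z.
Definition mxIm {R : realType} {n : nat} (Z : 'M[R[i]]_n) : 'M[R]_n :=
  map_mx (@complex.Im R) Z.

(* Main.v *)
Require Import Defs.
From mathcomp Require Import all_boot all_algebra.
From mathcomp Require Import all_classical all_reals all_analysis.
From mathcomp Require Import complex.
Import GRing.Theory Num.Theory numFieldTopology.Exports numFieldNormedType.Exports.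
Local Open Scope ring_scope.
From mathcomp Require Import qpoly zify perm ring lra.
Import order.Order.TTheory.
Lemma size_prod_ord2 (F : comNzRingType) (n : nat) (G : 'I_n -> {poly F}) :
  (forall i, (size (G i) <= 2)%N) -> (size (\prod_(i < n) G i)%R <= n.+1)%N.
Proof.
elim: n G => [|n IH] G HG; first by rewrite big_ord0 size_poly1.
rewrite big_ord_recr /=.
apply: (leq_trans (size_polyMleq _ _)).
have h1 := IH (fun i => G (widen_ord (leqnSn n) i)) (fun i => HG _).
have h2 := HG ord_max.
rewrite -subn1 leq_subLR; apply: leq_trans (leq_add h1 h2) _; lia.
Qed.

Lemma size_det_le (F : comNzRingType) (n : nat) (N : 'M[{poly F}]_n) :
  (forall i j, (size (N i j) <= 2)%N) -> (size (\det N) <= n.+1)%N.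
Proof.
move=> HN; rewrite /determinant.
apply: (leq_trans (size_sum _ _ _)).
apply/bigmax_leqP => s _.
apply: (leq_trans (size_polyMleq _ _)).
have h1 : (size ((-1) ^+ perm.odd_perm s : {poly F}) <= 1)%N.
  by case: (perm.odd_perm s); rewrite ?expr1 ?expr0 ?size_polyN size_poly1.
have h2 := @size_prod_ord2 _ _ _ (fun i => HN i (s i)).
rewrite -subn1 leq_subLR; apply: leq_trans (leq_add h1 h2) _; lia.
Qed.

Definition node (R : realType) (n k : nat) : R := k%:R / n.+1%:R.
Definition nodeC (R : realType) (n k : nat) : R[i] := (node R n k)%:C%C.

Lemma nodeC_inj (R : realType) n : injective (nodeC R n).
Proof.
move=> k l [] /(congr1 (fun x => x * n.+1%:R)).
rewrite !divfK ?pnatr_eq0 //.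
by move/eqP; rewrite eqr_nat => /eqP.
Qed.

Definition lcoef (R : realType) (n : nat) (k : 'I_n.+1) : R[i] :=
  (tnth (@lagrange R[i] n.+1 (nodeC R n)) k).['i%C].

Lemma det_interp (R : realType) (n : nat) (M : 'M[R[i]]_n) :
  \det M = \sum_(k < n.+1)
     ((\det (mxRe M + node R n k *: mxIm M))%:C%C * lcoef R n k).
Proof.
pose P : {poly R[i]} := \det (\matrix_(i, j)
   (((complex.Re (M i j))%:C%C)%:P + ((complex.Im (M i j))%:C%C)%:P * 'X)).
have Pev : forall z, P.[z] = \det (\matrix_(i, j)
   ((complex.Re (M i j))%:C%C + (complex.Im (M i j))%:C%C * z)).
  move=> z; have -> : P.[z] = horner_eval z P by [].
  rewrite /P -det_map_mx; congr (\det _).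
  by apply/matrixP => i j; rewrite !mxE /= /horner_eval !hornerE.
have sP : (size P <= n.+1)%N.
  apply: size_det_le => i j; rewrite mxE.
  apply: (leq_trans (size_polyD _ _)); rewrite geq_max size_polyC.
  rewrite mul_polyC; apply/andP; split; first by case: (_ != 0).
  by apply: (leq_trans (size_scale_leq _ _)); rewrite size_polyX.
have E : P.['i%C] = \sum_(k < n.+1) P.[nodeC R n k] * lcoef R n k.
  rewrite {1}(lagrange_gen (ltn0Sn n) (@nodeC_inj R n) sP) horner_sum.
  by apply: eq_bigr => k _; rewrite hornerM hornerC.
have EM : P.['i%C] = \det M.
  rewrite Pev; congr (\det _); apply/matrixP => i j; rewrite mxE.
  by rewrite mulrC -complexE.
rewrite -EM E.
apply: eq_bigr => k _.
congr (_ * _).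
rewrite Pev -det_map_mx; congr (\det _).
apply/matrixP => i j; rewrite !mxE /=.
by rewrite rmorphD rmorphM /= mulrC.
Qed.
Local Open Scope classical_set_scope.
Lemma cont_int01 (R : realType) (f : R -> R) : continuous f ->
  (@lebesgue_measure R).-integrable `[0%R, 1%R] (EFin \o f).
Proof.
move=> cf; apply: continuous_compact_integrable; first exact: (@segment_compact R 0 1).
exact: continuous_subspaceT.
Qed.

Lemma cont_pairl (Y : topologicalType) (X : topologicalType) (y : Y) :
  continuous (fun t : X => (y, t)).
Proof.
move=> t; apply: cvg_pair; first exact: cvg_cst.
exact: cvg_id.
Qed.

Lemma param_cont (R : realType) (Y : topologicalType) (g : Y * R -> R) :
  continuous g ->
  continuous (fun y => Rintegral (@lebesgue_measure R) `[0%R, 1%R]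
                          (fun t : R => g (y, t))).
Proof.
move=> gc y0.
have gyc : forall y, continuous (fun t : R => g (y, t)).
  move=> y t; apply: (continuous_comp (f := fun t : R => (y, t))).
    exact: cont_pairl.
  exact: gc.
apply/cvgrPdist_le => e e0.
have cK : compact (`[0%R, 1%R] : set R) := @segment_compact R 0 1.
have Hn : \forall y \near y0, `[0%R, 1%R] `<=` (fun t => `|g (y0, t) - g (y, t)| <= e).
  apply: ((compact_near_coveringP _).1 cK Y (nbhs y0)
     (fun y t => `|g (y0, t) - g (y, t)| <= e) _) => t _.
  have := (cvgrPdist_le _ _).1 (gc (y0, t)) (e / 2) (divr_gt0 e0 (ltr0Sn _ 1)).
  move=> H; have {H} := H _.
  case=> [[A B] /= [nA nB] AB].
  exists (B, A); first by split.
  case=> t' y /= [Bt Ay].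
  have h1 := AB (y0, t') (conj (nbhs_singleton nA) Bt).
  have h2 := AB (y, t') (conj Ay Bt).
  apply: le_trans (ler_distD (g (y0, t)) _ _) _.
  rewrite (splitr e) distrC; exact: lerD.
move: Hn; apply: filterS => y Hy.
have cd : continuous (fun t => g (y0, t) - g (y, t)).
  by move=> t; apply: cvgB; [apply: gyc|apply: gyc].
rewrite -RintegralB //; [|exact: cont_int01 (gyc y0)|exact: cont_int01 (gyc y)].
apply: le_trans (le_normr_Rintegral _ _) _ => //; first exact: cont_int01.
apply: le_trans (@le_Rintegral _ _ _ _ _ _ (fun=> e) _ _ _ _) _ => //.
- apply: cont_int01; move=> t; apply: (@continuous_comp _ _ _ (fun t : R => g (y0, t) - g (y, t)) (@Num.norm _ R)); first exact: cd.
  exact: norm_continuous.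
- exact: cont_int01 (@cst_continuous _ _ e).
- rewrite Rintegral_cst //.
  have := lebesgue_measure_itv (`[0%R, 1%R]%R : interval R).
  rewrite /= lte_fin ltr01 oppr0 adde0 => ->.
  by rewrite /= mulr1.
Qed.
Lemma mx_cont (T : topologicalType) (R : realType) m n (f : T -> 'M[R]_(m, n)) :
  (forall i j, continuous (fun x => f x i j)) -> continuous f.
Proof.
move=> fc x A [P nP sPA].
have : \forall y \near x, forall i j, P i j (f y i j).
  apply: filter_forall => i; apply: filter_forall => j.
  exact: (fc i j x (P i j) (nP i j)).
by apply: filterS => y Hy; apply: sPA.
Qed.

Lemma entry_cont (R : realType) m n (i : 'I_m) (j : 'I_n) :
  continuous (fun M : 'M[R]_(m, n) => M i j).
Proof.
move=> M B nB.
exists (fun i' j' => if (i' == i) && (j' == j) then B else setT).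
  by move=> i' j'; case: ifP => [/andP[/eqP -> /eqP ->]//|_]; exact: filterT.
by move=> N /= HN; have := HN i j; rewrite !eqxx.
Qed.

Lemma fst_cont (X Y : topologicalType) : continuous (@fst X Y).
Proof. by move=> p; exact: cvg_fst. Qed.

Lemma snd_cont (X Y : topologicalType) : continuous (@snd X Y).
Proof. by move=> p; exact: cvg_snd. Qed.

Lemma pair_cont (X Y Z : topologicalType) (f : X -> Y) (g : X -> Z) :
  continuous f -> continuous g -> continuous (fun x => (f x, g x)).
Proof. by move=> cf cg x; apply: cvg_pair; [exact: cf|exact: cg]. Qed.

Lemma comp_cont (X Y Z : topologicalType) (f : X -> Y) (g : Y -> Z) :
  continuous f -> continuous g -> continuous (fun x => g (f x)).
Proof. by move=> cf cg x; exact: (@continuous_comp _ _ _ f g x (cf x) (cg (f x))). Qed.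

Lemma rowmx_cont (R : realType) d :
  continuous (fun p : R * 'rV[R]_d => row_mx (const_mx p.1 : 'rV[R]_1) p.2).
Proof.
apply: mx_cont => i k; rewrite -[k](@fintype.splitK 1 d); case: (fintype.split k) => j /=.
- have -> : (fun p : R * 'rV[R]_d => row_mx (const_mx p.1 : 'rV[R]_1) p.2 i (lshift d j))
      = (fun p => p.1).
    by apply: funext => p; rewrite row_mxEl mxE.
  exact: fst_cont.
- have -> : (fun p : R * 'rV[R]_d => row_mx (const_mx p.1 : 'rV[R]_1) p.2 i (rshift 1 j))
      = (fun p => p.2 i j).
    by apply: funext => p; rewrite row_mxEr.
  move=> p; apply: (@continuous_comp _ _ _ snd (fun M : 'rV[R]_d => M i j)); [exact: snd_cont|exact: entry_cont].
Qed.

Lemma ti_cont (R : realType) d : forall (Y : topologicalType)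
  (F : Y * 'rV[R]_d -> R), continuous F ->
  continuous (fun y => torus_int d (fun x => F (y, x))).
Proof.
elim: d => [|d IH] Y F Fc /=.
  apply: (@comp_cont _ _ _ (fun y : Y => (y, 0 : 'rV[R]_0)) F _ Fc).
  apply: pair_cont => //; [exact: (fun y => cvg_id) | move=> y; exact: cvg_cst].
apply: (@param_cont R Y (fun p : Y * R =>
   torus_int d (fun x => F (p.1, row_mx (const_mx p.2 : 'rV[R]_1) x)))).
apply: (IH (Y * R)%type (fun q => F (q.1.1, row_mx (const_mx q.1.2 : 'rV[R]_1) q.2))).
apply: (@comp_cont _ _ _ (fun q : (Y * R) * 'rV[R]_d =>
   (q.1.1, row_mx (const_mx q.1.2 : 'rV[R]_1) q.2)) F _ Fc).
apply: pair_cont.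
  exact: (@comp_cont _ _ _ fst fst (@fst_cont _ _) (@fst_cont _ _)).
apply: (@comp_cont _ _ _ (fun q : (Y * R) * 'rV[R]_d => (q.1.2, q.2))
   (fun p : R * 'rV[R]_d => row_mx (const_mx p.1 : 'rV[R]_1) p.2) _ (@rowmx_cont R d)).
apply: pair_cont.
  exact: (@comp_cont _ _ _ fst snd (@fst_cont _ _) (@snd_cont _ _)).
exact: snd_cont.
Qed.

Lemma cin (R : realType) d (h : 'rV[R]_d.+1 -> R) : continuous h ->
  forall t : R, continuous (fun x : 'rV[R]_d => h (row_mx (const_mx t : 'rV[R]_1) x)).
Proof.
move=> ch t.
apply: (@comp_cont _ _ _ (fun x : 'rV[R]_d => row_mx (const_mx t : 'rV[R]_1) x) h _ ch).
apply: (@comp_cont _ _ _ (fun x : 'rV[R]_d => (t, x))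
   (fun p : R * 'rV[R]_d => row_mx (const_mx p.1 : 'rV[R]_1) p.2) _ (@rowmx_cont R d)).
exact: cont_pairl.
Qed.

Lemma cout (R : realType) d (h : 'rV[R]_d.+1 -> R) : continuous h ->
  continuous (fun t : R => torus_int d (fun x : 'rV[R]_d => h (row_mx (const_mx t : 'rV[R]_1) x))).
Proof.
move=> ch.
apply: (@ti_cont R d R (fun p : R * 'rV[R]_d => h (row_mx (const_mx p.1 : 'rV[R]_1) p.2))).
exact: (@comp_cont _ _ _ (fun p : R * 'rV[R]_d => row_mx (const_mx p.1 : 'rV[R]_1) p.2) h
  (@rowmx_cont R d) ch).
Qed.

Lemma ti_lin (R : realType) d : forall (f g : 'rV[R]_d -> R) (a : R),
  continuous f -> continuous g ->
  torus_int d (fun x => a * f x + g x) = a * torus_int d f + torus_int d g.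
Proof.
elim: d => [|d IH] f g a cf cg //=.
transitivity (Rintegral (@lebesgue_measure R) `[0%R, 1%R] (fun t : R =>
   a * torus_int d (fun x => f (row_mx (const_mx t : 'rV[R]_1) x)) +
   torus_int d (fun x => g (row_mx (const_mx t : 'rV[R]_1) x)))).
  congr Rintegral; apply: funext => t; exact: IH (@cin _ _ f cf t) (@cin _ _ g cg t).
have mI : measurable (`[0%R, 1%R] : set R) by exact: measurable_itv.
rewrite RintegralD //; last exact: cont_int01 (@cout _ _ g cg).
  by rewrite RintegralZl //; exact: cont_int01 (@cout _ _ f cf).
apply: cont_int01 => t; apply: cvgM; [exact: cvg_cst | exact: (@cout _ _ f cf)].
Qed.

Lemma ti0 (R : realType) d : torus_int d (fun _ : 'rV[R]_d => (0 : R)) = 0.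
Proof.
have c0 : continuous (fun _ : 'rV[R]_d => (0 : R)) by apply: cst_continuous.
have := @ti_lin R d _ _ (-1) c0 c0.
move=> H.
have -> : torus_int d (fun _ : 'rV[R]_d => (0 : R)) =
  torus_int d (fun x : 'rV[R]_d => -1 * (fun _ => (0 : R)) x + (fun _ => (0 : R)) x).
  by congr torus_int; apply: funext => x; rewrite mulr0 addr0.
by rewrite H mulN1r addNr.
Qed.

Lemma cont_sum (T : topologicalType) (R : realType) (I : Type) (r : seq I)
  (F : I -> T -> R) : (forall i, continuous (F i)) ->
  continuous (fun x => \sum_(i <- r) F i x).
Proof.
move=> cF; elim: r => [|i r IHr].
  have -> : (fun x : T => \sum_(i <- [::]) F i x) = (fun _ => 0).
    by apply: funext => x; rewrite big_nil.
  by apply: cst_continuous.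
have -> : (fun x : T => \sum_(j <- i :: r) F j x) =
   (fun x => F i x + \sum_(j <- r) F j x).
  by apply: funext => x; rewrite big_cons.
by move=> x; apply: cvgD; [exact: cF | exact: IHr].
Qed.

Lemma cont_prod (T : topologicalType) (R : realType) (I : Type) (r : seq I)
  (F : I -> T -> R) : (forall i, continuous (F i)) ->
  continuous (fun x => \prod_(i <- r) F i x).
Proof.
move=> cF; elim: r => [|i r IHr].
  have -> : (fun x : T => \prod_(i <- [::]) F i x) = (fun _ => 1).
    by apply: funext => x; rewrite big_nil.
  by apply: cst_continuous.
have -> : (fun x : T => \prod_(j <- i :: r) F j x) =
   (fun x => F i x * \prod_(j <- r) F j x).
  by apply: funext => x; rewrite big_cons.
by move=> x; apply: cvgM; [exact: cF | exact: IHr].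
Qed.

Lemma cont_det (T : topologicalType) (R : realType) n (G : T -> 'M[R]_n) :
  (forall i j, continuous (fun x => G x i j)) -> continuous (fun x => \det (G x)).
Proof.
move=> cG.
have -> : (fun x => \det (G x)) =
   (fun x => \sum_(s : 'S_n) (-1) ^+ s * \prod_i G x i (s i)) by [].
apply: cont_sum.
move=> s x; apply: cvgM; first exact: cvg_cst.
exact: (@cont_prod T R _ _ (fun i x => G x i (s i))).
Qed.

Lemma cont_scale (T : topologicalType) (R : realType) (a : R) (f : T -> R) :
  continuous f -> continuous (fun x => a * f x).
Proof. by move=> cf x; apply: cvgMl_tmp; exact: cf. Qed.

Lemma cont_add (T : topologicalType) (R : realType) (f g : T -> R) :
  continuous f -> continuous g -> continuous (fun x => f x + g x).
Proof. by move=> cf cg x; apply: cvgD; [exact: cf|exact: cg]. Qed.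

Lemma ti_sum (R : realType) d (I : Type) (r : seq I) (a : I -> R)
  (f : I -> 'rV[R]_d -> R) : (forall i, continuous (f i)) ->
  torus_int d (fun x => \sum_(i <- r) a i * f i x) =
  \sum_(i <- r) a i * torus_int d (f i).
Proof.
move=> cf; elim: r => [|i r IHr].
  have -> : (fun x => \sum_(i <- [::]) a i * f i x) = (fun _ => 0).
    by apply: funext => x; rewrite big_nil.
  by rewrite ti0 big_nil.
have -> : (fun x => \sum_(j <- i :: r) a j * f j x) =
   (fun x => a i * f i x + \sum_(j <- r) a j * f j x).
  by apply: funext => x; rewrite big_cons.
rewrite ti_lin ?IHr ?big_cons //.
have := (@cont_sum 'rV[R]_d R _ r (fun j x => a j * f j x)).
apply => j; exact: cont_scale.
Qed.
Local Close Scope classical_set_scope.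

Lemma ReM_real (R : realType) (r : R) (c : R[i]) :
  complex.Re ((r%:C)%C * c) = r * complex.Re c.
Proof. by case: c => a b /=; rewrite mul0r subr0. Qed.

Lemma ImM_real (R : realType) (r : R) (c : R[i]) :
  complex.Im ((r%:C)%C * c) = r * complex.Im c.
Proof. by case: c => a b /=; rewrite mul0r addr0. Qed.

Theorem lemma6 (R : realType) (n : nat) :
  exists C : R, 0 < C /\
  forall (d : nat) (Z : 'rV[R]_d -> 'M[R[i]]_n),
    (forall i j : 'I_n, continuous (fun x : 'rV[R]_d => complex.Re (Z x i j)) /\
                        continuous (fun x : 'rV[R]_d => complex.Im (Z x i j))) ->
    torus_periodic Z ->
    (forall x, Z x \in unitmx) ->
    `|torus_cint d (fun x => \det (Z x))| = 1 ->
    exists2 lambda : R, -1 <= lambda <= 1 &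
      C <= `|torus_int d (fun x => \det (mxRe (Z x) + lambda *: mxIm (Z x)))|.
Proof.
pose SR := \sum_(k < n.+1) `|complex.Re (lcoef R n k)|.
pose SI := \sum_(k < n.+1) `|complex.Im (lcoef R n k)|.
have SR0 : 0 <= SR by apply: sumr_ge0 => k _.
have SI0 : 0 <= SI by apply: sumr_ge0 => k _.
exists (1 + SR + SI)^-1; split; first by rewrite invr_gt0; lra.
move=> d Z Zc _ _ H1.
pose fk (k : 'I_n.+1) := (fun x => \det (mxRe (Z x) + node R n k *: mxIm (Z x))).
have fkc : forall k, continuous (fk k).
  move=> k; apply: cont_det => i j.
  have -> : (fun x => (mxRe (Z x) + node R n k *: mxIm (Z x)) i j) =
     (fun x => complex.Re (Z x i j) + node R n k * complex.Im (Z x i j)).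
    by apply: funext => x; rewrite !mxE.
  apply: cont_add; first exact: (Zc i j).1.
  exact: (@cont_scale _ _ (node R n k) _ (Zc i j).2).
case: (pselect (exists k : 'I_n.+1, (1 + SR + SI)^-1 <= `|torus_int d (fk k)|)).
  case=> k Hk; exists (node R n k) => //.
  have h0 : 0 <= node R n k by rewrite /node divr_ge0.
  have h1 : node R n k <= 1.
    by rewrite /node ler_pdivrMr ?ltr0Sn // mul1r ler_nat ltnW.
  apply/andP; split; lra.
move=> Hno; exfalso.
have Hlt : forall k, `|torus_int d (fk k)| < (1 + SR + SI)^-1.
  move=> k; rewrite ltNge; apply/negP => Hk; apply: Hno; by exists k.
have Edet : forall x, \det (Z x) = \sum_(k < n.+1) ((fk k x)%:C%C * lcoef R n k).
  by move=> x; rewrite det_interp.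
pose a := torus_int d (fun x => complex.Re (\det (Z x))).
pose b := torus_int d (fun x => complex.Im (\det (Z x))).
have Ea : a = \sum_(k < n.+1) complex.Re (lcoef R n k) * torus_int d (fk k).
  rewrite /a -ti_sum //; congr torus_int; apply: funext => x.
  rewrite Edet raddf_sum /=; apply: eq_bigr => k _.
  by rewrite ReM_real mulrC.
have Eb : b = \sum_(k < n.+1) complex.Im (lcoef R n k) * torus_int d (fk k).
  rewrite /b -ti_sum //; congr torus_int; apply: funext => x.
  rewrite Edet raddf_sum /=; apply: eq_bigr => k _.
  by rewrite ImM_real mulrC.
have bound : forall (c : 'I_n.+1 -> R),
   `|\sum_(k < n.+1) c k * torus_int d (fk k)| <=
   (1 + SR + SI)^-1 * \sum_(k < n.+1) `|c k|.
  move=> c; apply: le_trans (ler_norm_sum _ _ _) _.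
  rewrite mulr_sumr; apply: ler_sum => k _.
  rewrite normrM mulrC; apply: ler_wpM2r => //.
  exact: ltW.
have Ha := bound (fun k => complex.Re (lcoef R n k)).
have Hb := bound (fun k => complex.Im (lcoef R n k)).
rewrite -Ea in Ha; rewrite -Eb in Hb.
have Hab : a ^+ 2 + b ^+ 2 = 1.
  move: H1; rewrite /torus_cint normc_def /= -/a -/b.
  move/(congr1 (@complex.Re R)) => /= Hs.
  have := sqr_sqrtr (addr_ge0 (sqr_ge0 a) (sqr_ge0 b)).
  by rewrite Hs expr1n => <-.
have Cinv : (1 + SR + SI)^-1 * (1 + SR + SI) = 1 by rewrite mulVf //; lra.
have Cpos : 0 < (1 + SR + SI)^-1 by rewrite invr_gt0; lra.
have na : `|a| ^+ 2 = a ^+ 2 by rewrite real_normK // num_real.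
have nb : `|b| ^+ 2 = b ^+ 2 by rewrite real_normK // num_real.
have := normr_ge0 a; have := normr_ge0 b.
rewrite -/SR -/SI in Ha Hb.
move=> hv hu.
rewrite !mulrDr mulr1 in Cinv.
have huv : `|a| + `|b| < 1 by lra.
have := mulr_ge0 hu hv.
rewrite -na -nb in Hab.
nra.
Qed.
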